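(* Let $G$ be a finite group. Then: (a) $\omega(\mathrm{EPow}(G))$ is the order of the largest cyclic subgroup of $G$; (b) $\omega(\mathrm{Com}(G))$ is the order of the largest abelian subgroup of $G$; (c) $\omega(\mathrm{DCom}(G))$ is the order of the largest subgroup of $G$ whose inverse image in any central extension of $G$ is abelian.
   Context: $\omega(\Gamma)$ is the clique number (size of a largest set of pairwise adjacent vertices). Graphs have vertex set $G$. $\mathrm{EPow}(G)$: distinct $x,y$ adjacent iff $\langle x,y\rangle$ is cyclic. $\mathrm{Com}(G)$: adjacent iff $xy=yx$. $\mathrm{DCom}(G)$: adjacent iff for every group $H$ with a central subgroup $Z$ and $H/Z\cong G$ (a central extension of $G$), any preimages of $x$ and $y$ in $H$ commute. *)

(* Defs.v *)
From mathcomp Require Import all_boot all_fingroup all_solvable.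
Set Implicit Arguments. Unset Strict Implicit. Unset Printing Implicit Defensive.
Local Open Scope group_scope.

(* Graphs on the vertex set G (a subgroup of gT); adjacency given as a Prop
   relation on distinct vertices. *)

Section Graphs.
Variable gT : finGroupType.

Definition is_clique (G : {set gT}) (adj : gT -> gT -> Prop) (S : {set gT}) :=
  S \subset G /\ forall x y, x \in S -> y \in S -> x != y -> adj x y.

Definition is_clique_number (G : {set gT}) (adj : gT -> gT -> Prop) (n : nat) :=
  (exists S, is_clique G adj S /\ #|S| = n) /\
  (forall S, is_clique G adj S -> #|S| <= n).

Definition is_max_subgroup_order (G : {set gT}) (P : {group gT} -> Prop) (n : nat) :=
  (exists H : {group gT}, H \subset G /\ P H /\ #|H| = n) /\
  (forall H : {group gT}, H \subset G -> P H -> #|H| <= n).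

Definition EPow_adj (x y : gT) : Prop := cyclic <<[set x; y]>>.

Definition Com_adj (x y : gT) : Prop := x * y = y * x.

(* A central extension of G: a (possibly infinite) group E with a surjective
   homomorphism pi : E -> G whose kernel Z is central in E; equivalently
   E/Z ≅ G with Z central. *)
Record central_ext (G : {set gT}) := CentralExt {
  ce_T : Type;
  ce_mul : ce_T -> ce_T -> ce_T;
  ce_one : ce_T;
  ce_inv : ce_T -> ce_T;
  ce_mulA : forall a b c, ce_mul a (ce_mul b c) = ce_mul (ce_mul a b) c;
  ce_mul1 : forall a, ce_mul ce_one a = a;
  ce_mulV : forall a, ce_mul (ce_inv a) a = ce_one;
  ce_pi : ce_T -> gT;
  ce_pi_mul : forall a b, ce_pi (ce_mul a b) = ce_pi a * ce_pi b;
  ce_pi_in : forall a, ce_pi a \in G;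
  ce_pi_surj : forall g, g \in G -> exists a, ce_pi a = g;
  ce_ker_central : forall z, ce_pi z = 1 -> forall a, ce_mul z a = ce_mul a z
}.

Definition DCom_adj (G : {set gT}) (x y : gT) : Prop :=
  forall E : central_ext G, forall a b : ce_T E,
    ce_pi a = x -> ce_pi b = y -> ce_mul a b = ce_mul b a.

Definition preimage_abelian_all_ext (G : {set gT}) (H : {set gT}) : Prop :=
  forall E : central_ext G, forall a b : ce_T E,
    ce_pi a \in H -> ce_pi b \in H -> ce_mul a b = ce_mul b a.

End Graphs.

(* Main.v *)
Require Import Defs.
From mathcomp Require Import all_boot all_fingroup all_solvable.
From Stdlib Require Import ClassicalEpsilon.
Set Implicit Arguments. Unset Strict Implicit. Unset Printing Implicit Defensive.
Local Open Scope group_scope.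

Section Frame.
Variable gT : finGroupType.

Lemma frame (G : {group gT}) (adj : gT -> gT -> Prop) (P : {group gT} -> Prop) :
  P 1%G ->
  (forall H : {group gT}, H \subset G -> P H -> is_clique G adj H) ->
  (forall S, is_clique G adj S -> exists H : {group gT}, [/\ H \subset G, P H & S \subset H]) ->
  exists n, is_clique_number G adj n /\ is_max_subgroup_order G P n.
Proof.
move=> P1 Hcl Hsub.
pose b (H : {group gT}) := (H \subset G) && (if excluded_middle_informative (P H) then true else false).
have b1 : b 1%G by rewrite /b sub1G; case: excluded_middle_informative.
case: (@arg_maxnP _ 1%G b (fun H => #|H|) b1) => H0 /andP[sH0 PH0b] Hmax.
have PH0 : P H0 by move: PH0b; case: excluded_middle_informative.
have bP (H : {group gT}) : H \subset G -> P H -> b H.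
  by move=> sH PH; rewrite /b sH; case: excluded_middle_informative.
exists #|H0|; split; split.
- by exists H0; split => //; apply: Hcl.
- move=> S /Hsub [H [sH PH sSH]]; apply: leq_trans (subset_leq_card sSH) _.
  exact: Hmax (bP _ sH PH).
- by exists H0.
- by move=> H sH PH; apply: Hmax (bP _ sH PH).
Qed.
End Frame.
Section DC.
Variable gT : finGroupType.
Variable G : {set gT}.
Variable E : central_ext G.
Local Notation T := (ce_T E).
Local Notation m := (@ce_mul _ _ E).
Local Notation e1 := (@ce_one _ _ E).
Local Notation inv := (@ce_inv _ _ E).
Local Notation pi := (@ce_pi _ _ E).

Lemma ce_mulVr a : m a (inv a) = e1.
Proof.
rewrite -[LHS]ce_mul1 -[in X in m X _](ce_mulV (inv a)).
rewrite -ce_mulA [m (inv a) (m a (inv a))]ce_mulA ce_mulV ce_mul1.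
exact: ce_mulV.
Qed.

Lemma ce_pi1 : pi e1 = 1.
Proof.
have h : pi e1 = pi e1 * pi e1 by rewrite -ce_pi_mul ce_mul1.
by apply: (mulgI (pi e1)); rewrite mulg1 -h.
Qed.

Lemma ce_piV a : pi (inv a) = (pi a)^-1.
Proof.
apply: (mulIg (pi a)); rewrite mulVg -ce_pi_mul ce_mulV; exact: ce_pi1.
Qed.

Lemma ce_same a b : pi a = pi b -> m a b = m b a.
Proof.
move=> eab; have hk : pi (m (inv a) b) = 1 by rewrite ce_pi_mul ce_piV eab mulVg.
have eb : b = m a (m (inv a) b) by rewrite ce_mulA ce_mulVr ce_mul1.
by rewrite {1 2}eb -ce_mulA (ce_ker_central hk a).
Qed.

Lemma ce_comm_gen (S : {set gT}) c : S \subset G ->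
  (forall e, pi e \in S -> m c e = m e c) ->
  forall e, pi e \in <<S>> -> m c e = m e c.
Proof.
move=> sSG hS e /gen_prodgP [n [f fS]].
elim: n f fS e => [|n IH] f fS e.
  rewrite big_ord0 => he; exact: (esym (ce_ker_central he c)).
rewrite big_ord_recl => he.
have [a0 ha0] := ce_pi_surj E (subsetP sSG _ (fS ord0)).
have he' : pi (m (inv a0) e) = \prod_(i < n) f (lift ord0 i).
  by rewrite ce_pi_mul ce_piV he ha0 mulKg.
have ee : e = m a0 (m (inv a0) e) by rewrite ce_mulA ce_mulVr ce_mul1.
have c1 := IH (fun i => f (lift ord0 i)) (fun i => fS _) _ he'.
have c2 : m c a0 = m a0 c by apply: hS; rewrite ha0.
by rewrite ee ce_mulA c2 -ce_mulA c1 ce_mulA.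
Qed.

End DC.
Lemma ab_comm (gT : finGroupType) (A : {set gT}) x y : abelian A -> x \in A -> y \in A -> commute x y.
Proof. by move=> /centsP cA xA yA; apply: cA. Qed.

Section EP.
Variable gT : finGroupType.
Variable S : {set gT}.
Hypothesis hS : forall x y, x \in S -> y \in S -> cyclic <<[set x; y]>>.

Lemma ep_comm x y : x \in S -> y \in S -> commute x y.
Proof.
move=> xS yS; apply: (ab_comm (cyclic_abelian (hS xS yS)));
by apply: mem_gen; rewrite !inE eqxx ?orbT.
Qed.

Lemma ep_abelian : abelian <<S>>.
Proof.
rewrite abelian_gen; apply/centsP => x xS y yS; exact/esym/ep_comm.
Qed.

Lemma ep_part x y (p : nat) : x \in S -> y \in S ->
  #[x.`_p] <= #[y.`_p] -> x.`_p \in <[y.`_p]>.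
Proof.
move=> xS yS le.
have cC := hS xS yS.
have sx : <[x.`_p]> \subset <<[set x; y]>>.
  rewrite cycle_subG; apply: (subsetP _ _ (cycle_constt p x)).
  by rewrite cycle_subG mem_gen // !inE eqxx.
have sy : <[y.`_p]> \subset <<[set x; y]>>.
  rewrite cycle_subG; apply: (subsetP _ _ (cycle_constt p y)).
  by rewrite cycle_subG mem_gen // !inE eqxx ?orbT.
rewrite -cycle_subG -(cardSg_cyclic cC sx sy) -!orderE !order_constt.
rewrite !p_part; case: (leqP (logn p #[x]) (logn p #[y])) => h.
  exact: dvdn_exp2l.
have h2 : (p ^ logn p #[y] %| p ^ logn p #[x])%N by apply: dvdn_exp2l; apply: ltnW.
move: le; rewrite !order_constt !p_part => le.
have -> : (p ^ logn p #[x] = p ^ logn p #[y])%N.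
  have hp : (0 < p ^ logn p #[x])%N by rewrite -p_part part_gt0.
  by apply/eqP; rewrite eqn_leq le (dvdn_leq hp h2).
exact: dvdnn.
Qed.

Variable s0 : gT.
Hypothesis s0S : s0 \in S.

Definition uu (p : nat) := [arg max_(s > s0 in S) #[s.`_p]].

Lemma uu_spec p : uu p \in S /\ forall x, x \in S -> #[x.`_p] <= #[(uu p).`_p].
Proof. by rewrite /uu; case: arg_maxnP => // u uS h; split. Qed.

Fixpoint gg n := if n is n'.+1 then gg n' * (uu n').`_n' else 1.

Lemma gg_spec n : [/\ gg n \in <<S>>, [pred q | q < n].-elt (gg n) &
   forall p x, p < n -> x \in S -> x.`_p \in <[gg n]>].
Proof.
elim: n => [|n [gS ge gm]] /=.
  split; [exact: group1 | by rewrite /p_elt order1 | by []].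
have [uS umax] := uu_spec n.
have wS : (uu n).`_n \in <<S>>.
  by apply: (subsetP _ _ (cycle_constt n (uu n))); rewrite cycle_subG mem_gen.
have cw : commute (gg n) (uu n).`_n := ab_comm ep_abelian gS wS.
have cop : coprime #[gg n] #[(uu n).`_n].
  apply: (pnat_coprime ge); apply: sub_p_elt (p_elt_constt n (uu n)).
  by move=> q; rewrite !inE /= => /eqP ->; rewrite ltnn.
split.
- exact: groupM gS wS.
- apply: p_eltM => //.
    by apply: sub_p_elt ge => q; rewrite !inE /=; apply: ltnW.
  by apply: sub_p_elt (p_elt_constt n (uu n)) => q; rewrite !inE /= => /eqP ->.
- move=> p x; rewrite ltnS leq_eqVlt => /orP [/eqP -> | lt] xS; rewrite cycleM //.
    apply: (subsetP (mulG_subr _ _)); exact: (ep_part xS uS (umax x xS)).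
  by apply: (subsetP (mulG_subl _ _)); apply: gm.
Qed.

Lemma ep_cover : exists g, g \in <<S>> /\ S \subset <[g]>.
Proof.
have [gS _ gm] := gg_spec #|gT|.+1.
exists (gg #|gT|.+1); split => //; apply/subsetP => x xS.
rewrite -(prod_constt x) big_nat group_prod // => p /andP [_ lt].
apply: gm xS; apply: leq_trans lt _; rewrite ltnS; exact: max_card.
Qed.
End EP.

Unset Implicit Arguments.
Theorem mainTheorem5 (gT : finGroupType) (G : {group gT}) :
  [/\ exists n, is_clique_number G (@EPow_adj gT) n /\
                is_max_subgroup_order G (fun H => cyclic H) n,
      exists n, is_clique_number G (@Com_adj gT) n /\
                is_max_subgroup_order G (fun H => abelian H) n
    & exists n, is_clique_number G (DCom_adj G) n /\
                is_max_subgroup_order G (fun H => preimage_abelian_all_ext G H) n].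
Proof.
have pairsub (x y : gT) (H : {group gT}) : x \in H -> y \in H -> <<[set x; y]>> \subset H.
  move=> xH yH; rewrite gen_subG; apply/subsetP => z.
  by rewrite !inE => /orP [/eqP -> | /eqP ->].
split.
- apply: frame; first exact: cyclic1.
    move=> H sH cH; split => // x y xH yH _.
    exact: cyclicS (pairsub _ _ _ xH yH) cH.
  move=> S [sSG hcl].
  have hS : forall x y, x \in S -> y \in S -> cyclic <<[set x; y]>>.
    move=> x y xS yS; case: (eqVneq x y) => [<- | ne]; last exact: hcl.
    exact: cyclicS (pairsub _ _ _ (cycle_id x) (cycle_id x)) (cycle_cyclic x).
  case: (set_0Vmem S) => [-> | [s0 s0S]].
    by exists 1%G; split; [exact: sub1G | exact: cyclic1 | exact: sub0set].
  have [g [gS sSg]] := ep_cover hS s0S.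
  exists <[g]>%G; split => //; last exact: cycle_cyclic.
  by rewrite cycle_subG; apply: (subsetP _ _ gS); rewrite gen_subG.
- apply: frame; first exact: abelian1.
    move=> H sH cH; split => // x y xH yH _.
    exact: ab_comm cH xH yH.
  move=> S [sSG hcl].
  exists <<S>>%G; split => /=; first by rewrite gen_subG.
    rewrite abelian_gen; apply/centsP => x xS y yS.
    case: (eqVneq x y) => [<- // | ne]; have h := hcl x y xS yS ne; rewrite /Com_adj in h; exact: h.
  by apply/subsetP => z zS; apply: mem_gen.
- apply: frame.
  + move=> E a b /set1P ha _; exact: ce_ker_central ha b.
  + move=> H sH PH; split => // x y xH yH _ E a b ha hb.
    by apply: PH; rewrite ?ha ?hb.
  + move=> S [sSG hcl].
    exists <<S>>%G; split => /=; first by rewrite gen_subG.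
      move=> E a b ha hb.
      have h1 : forall c : ce_T E, ce_pi c \in S -> forall e : ce_T E, ce_pi e \in S -> ce_mul c e = ce_mul e c.
        move=> c hc e he; case: (eqVneq (ce_pi c) (ce_pi e)) => [eq | ne].
          exact: ce_same.
        exact: (hcl _ _ hc he ne E c e).
      apply: (ce_comm_gen sSG _ hb) => e he.
      apply/esym; exact: (ce_comm_gen sSG (h1 e he) ha).
    by apply/subsetP => z zS; apply: mem_gen.
Qed.
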